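(* Let $(L,\delta,\alpha,\beta)$ be a BiHom-Lie algebra, let $(V,\alpha_V,\beta_V)$ be an abelian BiHom-Lie algebra, and let $d\colon (L\oplus V)\times(L\oplus V)\to L\oplus V$ be a bilinear map. Let $i_0\colon V\to L\oplus V$, $i_0(v)=v$, and $\pi_0\colon L\oplus V\to L$, $\pi_0(x+v)=x$. Then $(L\oplus V,d,\alpha+\alpha_V,\beta+\beta_V)$ is a BiHom-Lie algebra and $$0\longrightarrow (V,\alpha_V,\beta_V)\xrightarrow{\ i_0\ }(L\oplus V,d,\alpha+\alpha_V,\beta+\beta_V)\xrightarrow{\ \pi_0\ }(L,\delta,\alpha,\beta)\longrightarrow 0$$ is an extension of $L$ by $V$ if and only if there exist bilinear maps $\lambda_l\colon L\times V\to V$, $\lambda_r\colon V\times L\to V$ and $\theta\colon L\times L\to V$ such that $$d(x+v,y+w)=\delta(x,y)+\theta(x,y)+\lambda_l(x,w)+\lambda_r(v,y)\quad\text{for all }x,y\in L,\ v,w\in V,$$ $(\lambda_l,\lambda_r)$ is a representation of $L$ on $V$, and $\theta$ is a $2$-cocycle of $L$ on $V$ with respect to this representation.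
   Context: All vector spaces are over a field $\mathbb{K}$. A BiHom-Lie algebra $(L,[\cdot,\cdot],\alpha,\beta)$ is a vector space $L$ with a bilinear map $[\cdot,\cdot]\colon L\times L\to L$ and linear maps $\alpha,\beta\colon L\to L$ such that $\alpha\circ\beta=\beta\circ\alpha$, $[\beta(x),\alpha(y)]=-[\beta(y),\alpha(x)]$, and $[\beta^2(x),[\beta(y),\alpha(z)]]+[\beta^2(y),[\beta(z),\alpha(x)]]+[\beta^2(z),[\beta(x),\alpha(y)]]=0$ for all $x,y,z\in L$ ($\alpha,\beta$ need not be multiplicative). A morphism $f\colon(L,[\cdot,\cdot],\alpha,\beta)\to(L',[\cdot,\cdot]',\alpha',\beta')$ is a linear map with $f\circ\alpha=\alpha'\circ f$, $f\circ\beta=\beta'\circ f$, $f([x,y])=[f(x),f(y)]'$. An abelian BiHom-Lie algebra $(V,\alpha_V,\beta_V)$ is a BiHom-Lie algebra whose bracket is identically zero (so $\alpha_V,\beta_V$ are commuting linear maps). On $L\oplus V$, $\alpha+\alpha_V$ denotes $x+v\mapsto \alpha(x)+\alpha_V(v)$, and similarly $\beta+\beta_V$. An extension of $(L,\delta,\alpha,\beta)$ by $(V,\mu,\alpha_V,\beta_V)$ is a sequence $0\to V\xrightarrow{i}M\xrightarrow{\pi}L\to 0$ of BiHom-Lie algebras and BiHom-Lie morphisms with $i$ injective, $\pi$ surjective and $\mathrm{Im}(i)=\ker(\pi)$. A representation of the BiHom-Lie algebra $(L,\delta,\alpha,\beta)$ on the abelian BiHom-Lie algebra $(V,\alpha_V,\beta_V)$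 is a pair of bilinear maps $\lambda_l\colon L\times V\to V$, $\lambda_r\colon V\times L\to V$ such that for all $x,y\in L$, $v\in V$: $\lambda_r(\beta_V(v),\alpha(y))=-\lambda_l(\beta(y),\alpha_V(v))$ and $\lambda_l(\beta^2(x),\lambda_l(\beta(y),\alpha_V(v)))+\lambda_l(\beta^2(y),\lambda_r(\beta_V(v),\alpha(x)))+\lambda_r(\beta_V^2(v),\delta(\beta(x),\alpha(y)))=0$. Given such a representation, a $2$-cocycle of $L$ on $V$ is a bilinear map $\theta\colon L\times L\to V$ with $\theta(\beta(x),\alpha(y))=-\theta(\beta(y),\alpha(x))$ and $\theta(\beta^2(x),\delta(\beta(y),\alpha(z)))-\theta(\beta^2(y),\delta(\beta(x),\alpha(z)))+\theta(\beta^2(z),\delta(\beta(x),\alpha(y)))+\lambda_l(\beta^2(x),\theta(\beta(y),\alpha(z)))-\lambda_l(\beta^2(y),\theta(\beta(x),\alpha(z)))+\lambda_l(\beta^2(z),\theta(\beta(x),\alpha(y)))=0$ for all $x,y,z\in L$. *)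

(* Defs.v *)
From HB Require Import structures.
From mathcomp Require Import all_boot all_algebra.
Set Implicit Arguments. Unset Strict Implicit. Unset Printing Implicit Defensive.
Import GRing.Theory.
Local Open Scope ring_scope.

(* Vector spaces over a field K are lmodType K; L (+) V is the product (L * V). *)

Definition is_lin (K : fieldType) (U W : lmodType K) (f : U -> W) : Prop :=
  forall (a : K) (x y : U), f (a *: x + y) = a *: f x + f y.

Definition is_bilin (K : fieldType) (U W X : lmodType K) (f : U -> W -> X) : Prop :=
  (forall y, is_lin (fun x => f x y)) /\ (forall x, is_lin (f x)).

Definition BiHomLie (K : fieldType) (L : lmodType K)
    (br : L -> L -> L) (al be : L -> L) : Prop :=
  ((is_bilin br) /\ (is_lin al) /\ (is_lin be) /\ ((forall x, al (be x) = be (al x))) /\ ((forall x y, br (be x) (al y) = - br (be y) (al x)) /\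
      (forall x y z,
         br (be (be x)) (br (be y) (al z)) + br (be (be y)) (br (be z) (al x))
         + br (be (be z)) (br (be x) (al y)) = 0))).

(* abelian BiHom-Lie algebra: zero bracket *)
Definition zero_br (K : fieldType) (V : lmodType K) : V -> V -> V := fun _ _ => 0.

Definition BiHomLie_morphism (K : fieldType) (L L' : lmodType K)
    (br : L -> L -> L) (al be : L -> L)
    (br' : L' -> L' -> L') (al' be' : L' -> L') (f : L -> L') : Prop :=
  ((is_lin f) /\ ((forall x, f (al x) = al' (f x))) /\ ((forall x, f (be x) = be' (f x)) /\
      (forall x y, f (br x y) = br' (f x) (f y)))).

Definition is_extension (K : fieldType) (L V M : lmodType K)
    (brL : L -> L -> L) (aL bL : L -> L)
    (brV : V -> V -> V) (aV bV : V -> V)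
    (brM : M -> M -> M) (aM bM : M -> M)
    (i : V -> M) (p : M -> L) : Prop :=
  ((BiHomLie brV aV bV) /\ (BiHomLie brM aM bM) /\ (BiHomLie brL aL bL) /\ (BiHomLie_morphism brV aV bV brM aM bM i) /\ (BiHomLie_morphism brM aM bM brL aL bL p) /\ (injective i) /\ ((forall x, exists m, p m = x) /\
      (forall m, (exists v, i v = m) <-> p m = 0))).

Definition is_representation (K : fieldType) (L V : lmodType K)
    (dL : L -> L -> L) (al be : L -> L) (aV bV : V -> V)
    (ll : L -> V -> V) (lr : V -> L -> V) : Prop :=
  ((is_bilin ll) /\ (is_bilin lr) /\ ((forall y v, lr (bV v) (al y) = - ll (be y) (aV v)) /\
      (forall x y v,
         ll (be (be x)) (ll (be y) (aV v)) + ll (be (be y)) (lr (bV v) (al x))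
         + lr (bV (bV v)) (dL (be x) (al y)) = 0))).

Definition is_2cocycle (K : fieldType) (L V : lmodType K)
    (dL : L -> L -> L) (al be : L -> L)
    (ll : L -> V -> V) (th : L -> L -> V) : Prop :=
  ((is_bilin th) /\ ((forall x y, th (be x) (al y) = - th (be y) (al x)) /\
      (forall x y z,
         th (be (be x)) (dL (be y) (al z)) - th (be (be y)) (dL (be x) (al z))
         + th (be (be z)) (dL (be x) (al y))
         + ll (be (be x)) (th (be y) (al z)) - ll (be (be y)) (th (be x) (al z))
         + ll (be (be z)) (th (be x) (al y)) = 0))).

Definition sum_map (K : fieldType) (L V : lmodType K) (f : L -> L) (g : V -> V)
  : (L * V)%type -> (L * V)%type := fun m => (f m.1, g m.2).

(* Main.v *)
Require Import Defs.
From mathcomp Require Import all_boot all_algebra.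
Import GRing.Theory.
Local Open Scope ring_scope.
Section S.
Context {K : fieldType} {L V : lmodType K}.
Lemma lin0 {U W : lmodType K} {f : U -> W} : is_lin f -> f 0 = 0.
Proof. move=> h; have e := h 1 0 0; rewrite !scale1r addr0 in e; apply: (@addrI _ (f 0)); by rewrite addr0 -e. Qed.
Lemma linD {U W : lmodType K} {f : U -> W} : is_lin f -> forall x y, f (x + y) = f x + f y.
Proof. move=> h x y; by rewrite -{1}(scale1r x) (h 1 x y) !scale1r. Qed.
Lemma linZ {U W : lmodType K} {f : U -> W} : is_lin f -> forall a x, f (a *: x) = a *: f x.
Proof. move=> h a x; by rewrite -(addr0 (a *: x)) (h a x 0) (lin0 h) addr0. Qed.
Lemma linN {U W : lmodType K} {f : U -> W} : is_lin f -> forall x, f (- x) = - f x.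
Proof. move=> h x; by rewrite -scaleN1r (linZ h) scaleN1r. Qed.
Lemma pairE (a b : L * V) : a.1 = b.1 -> a.2 = b.2 -> a = b.
Proof. by case: a b => ? ? [? ?] /= -> ->. Qed.
Lemma fst_add (a b : L * V) : (a + b).1 = a.1 + b.1. Proof. by []. Qed.
Lemma snd_add (a b : L * V) : (a + b).2 = a.2 + b.2. Proof. by []. Qed.
Lemma snd_scale k (a : L * V) : (k *: a).2 = k *: a.2. Proof. by []. Qed.
Lemma fst_scale k (a : L * V) : (k *: a).1 = k *: a.1. Proof. by []. Qed.
Lemma splitp (x : L) (v : V) : (x, v) = (x, 0) + (0, v).
Proof. by apply: pairE; rewrite /= ?addr0 ?add0r. Qed.
Lemma bil0l {U W X : lmodType K} {f : U -> W -> X} : is_bilin f -> forall y, f 0 y = 0.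
Proof. by move=> [h1 h2] y; apply: (lin0 (h1 y)). Qed.
Lemma bil0r {U W X : lmodType K} {f : U -> W -> X} : is_bilin f -> forall x, f x 0 = 0.
Proof. by move=> [h1 h2] x; apply: (lin0 (h2 x)). Qed.
Lemma bilDr {U W X : lmodType K} {f : U -> W -> X} : is_bilin f -> forall x y z, f x (y + z) = f x y + f x z.
Proof. by move=> [h1 h2] x; apply: (linD (h2 x)). Qed.
Lemma bilNr {U W X : lmodType K} {f : U -> W -> X} : is_bilin f -> forall x y, f x (- y) = - f x y.
Proof. by move=> [h1 h2] x; apply: (linN (h2 x)). Qed.
Lemma lin_l {F : L * V -> L * V} : is_lin F -> is_lin (fun x : L => (F (x, 0)).2).
Proof.
move=> h a x y /=; have -> : (a *: x + y, 0) = a *: (x, 0) + (y, 0) :> L * V.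
  by apply: pairE; rewrite /= ?scaler0 ?addr0.
by rewrite (h a (x, 0) (y, 0)).
Qed.
Lemma lin_r {F : L * V -> L * V} : is_lin F -> is_lin (fun v : V => (F (0, v)).2).
Proof.
move=> h a x y /=; have -> : (0, a *: x + y) = a *: (0, x) + (0, y) :> L * V.
  by apply: pairE; rewrite /= ?scaler0 ?addr0.
by rewrite (h a (0, x) (0, y)).
Qed.
End S.

Theorem back (K : fieldType) (L V : lmodType K)
    (delta : L -> L -> L) (al be : L -> L) (aV bV : V -> V)
    (d : (L * V)%type -> (L * V)%type -> (L * V)%type) :
  BiHomLie delta al be ->
  BiHomLie (@zero_br K V) aV bV ->
  is_bilin d ->
  (exists (ll : L -> V -> V) (lr : V -> L -> V) (th : L -> L -> V),
     (is_bilin ll) /\ (is_bilin lr) /\ (is_bilin th) /\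
         ((forall (x y : L) (v w : V),
            d (x, v) (y, w) = (delta x y, th x y + ll x w + lr v y))) /\
         (is_representation delta al be aV bV ll lr) /\
         (is_2cocycle delta al be ll th)) ->
  (BiHomLie d (sum_map al aV) (sum_map be bV) /\
   is_extension delta al be (@zero_br K V) aV bV d (sum_map al aV) (sum_map be bV)
     (fun v : V => ((0 : L), v)) (fun m : (L * V)%type => m.1)).
Proof.
move=> hL hV hd [ll [lr [th [hll [hlr [hth [hf [[_ [_ [rep1 rep2]]] [_ [cs cc]]]]]]]]]].
have hL' := hL; have hV' := hV.
case: hL' => hdl [hal [hbe [hab [sk jac]]]].
case: hV' => _ [haV [hbV [habV _]]].
have hM : BiHomLie d (sum_map al aV) (sum_map be bV).
  split; first exact: hd.
  split. move=> a [x v] [y w]; apply: pairE => /=; by rewrite ?hal ?haV.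
  split. move=> a [x v] [y w]; apply: pairE => /=; by rewrite ?hbe ?hbV.
  split. by move=> [x v]; apply: pairE => /=; rewrite ?hab ?habV.
  split.
    move=> [x v] [y w]; rewrite /sum_map /= !hf; apply: pairE => /=; first exact: sk.
    rewrite cs !rep1.
    by rewrite !opprD opprK addrAC.
  move=> [x u] [y v] [z w]; rewrite /sum_map /= !hf; apply: pairE => /=; first exact: jac.
  rewrite !(bilDr hll) {1}(sk z x) (cs z x) (bilNr hth) (bilNr hll) !addrA.
  rewrite (@GRing.add V).[ACl ((3*9*15)*(8*14*5)*(13*4*10)*(1*6*11*2*7*12))%AC].
  by rewrite rep2 rep2 rep2 cc !addr0.
split; first exact: hM.
split; first exact: hV.
split; first exact: hM.
split; first exact: hL.
split.
  split. by move=> a v w; apply: pairE => /=; rewrite ?scaler0 ?addr0.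
  split. move=> v; rewrite /sum_map; apply: pairE => //=; symmetry; exact: (lin0 hal).
  split. move=> v; rewrite /sum_map; apply: pairE => //=; symmetry; exact: (lin0 hbe).
  move=> v w; rewrite hf /zero_br; apply: pairE => /=.
    by rewrite (bil0l hdl).
  by rewrite (bil0l hth) (bil0l hll) (bil0r hlr) !addr0.
split.
  split. by move=> a [? ?] [? ?].
  split. by case.
  split. by case.
  by move=> [x v] [y w]; rewrite hf.
split. by move=> v w [].
split. by move=> x; exists (x, 0).
move=> [x v] /=; split; first by case=> w [<- _].
by move=> ->; exists v.
Qed.

Theorem fwd (K : fieldType) (L V : lmodType K)
    (delta : L -> L -> L) (al be : L -> L) (aV bV : V -> V)
    (d : (L * V)%type -> (L * V)%type -> (L * V)%type) :
  BiHomLie delta al be ->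
  BiHomLie (@zero_br K V) aV bV ->
  is_bilin d ->
  (BiHomLie d (sum_map al aV) (sum_map be bV) /\
   is_extension delta al be (@zero_br K V) aV bV d (sum_map al aV) (sum_map be bV)
     (fun v : V => ((0 : L), v)) (fun m : (L * V)%type => m.1)) ->
  (exists (ll : L -> V -> V) (lr : V -> L -> V) (th : L -> L -> V),
     (is_bilin ll) /\ (is_bilin lr) /\ (is_bilin th) /\
         ((forall (x y : L) (v w : V),
            d (x, v) (y, w) = (delta x y, th x y + ll x w + lr v y))) /\
         (is_representation delta al be aV bV ll lr) /\
         (is_2cocycle delta al be ll th)).
Proof.
move=> hL hV hd [hM [_ [_ [_ [hi [hp _]]]]]].
case: hp => _ [_ [_ hpbr]].
case: hi => _ [_ [_ hibr]].
have hd' := hd; case: hd' => hd1 hd2.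
case: hL => hdl [hal [hbe [hab [sk jac]]]].
case: hV => _ [haV [hbV _]].
case: hM => _ [_ [_ [_ [skM jacM]]]].
have P0 : forall v w, d (0, v) (0, w) = 0 by move=> v w; rewrite -hibr.
have D : forall x v y w, d (x, v) (y, w) = d (x, 0) (y, 0) + d (x, 0) (0, w) + d (0, v) (y, 0) + d (0, v) (0, w).
  move=> x v y w; rewrite (splitp x v) (splitp y w) (linD (hd1 _)) !(linD (hd2 _)).
  by rewrite !addrA.
pose ll := fun x w => (d (x, 0) (0, w)).2.
pose lr := fun v y => (d (0, v) (y, 0)).2.
pose th := fun x y => (d (x, 0) (y, 0)).2.
have hll : is_bilin ll.
  by split=> [w|x]; [exact: (lin_l (hd1 (0, w))) | exact: (lin_r (hd2 (x, 0)))].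
have hlr : is_bilin lr.
  by split=> [y|v]; [exact: (lin_r (hd1 (y, 0))) | exact: (lin_l (hd2 (0, v)))].
have hth : is_bilin th.
  by split=> [y|x]; [exact: (lin_l (hd1 (y, 0))) | exact: (lin_l (hd2 (x, 0)))].
have hf : forall x y v w, d (x, v) (y, w) = (delta x y, th x y + ll x w + lr v y).
  move=> x y v w; apply: pairE; first by rewrite hpbr.
  by rewrite D !snd_add P0 /= addr0.
have be0 : be 0 = 0 := lin0 hbe.
have al0 : al 0 = 0 := lin0 hal.
have bV0 : bV 0 = 0 := lin0 hbV.
have aV0 : aV 0 = 0 := lin0 haV.
have rep1 : forall y v, lr (bV v) (al y) = - ll (be y) (aV v).
  move=> y v; have := skM (0, v) (y, 0); rewrite /sum_map /= !hf => /(congr1 snd) /=.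
  by do 3 rewrite ?be0 ?al0 ?bV0 ?aV0 ?(bil0l hth) ?(bil0r hth) ?(bil0l hll) ?(bil0r hll) ?(bil0l hlr) ?(bil0r hlr) ?(bil0l hdl) ?(bil0r hdl) ?add0r ?addr0.
have rep2 : forall x y v, ll (be (be x)) (ll (be y) (aV v)) + ll (be (be y)) (lr (bV v) (al x))
         + lr (bV (bV v)) (delta (be x) (al y)) = 0.
  move=> x y v; have := jacM (x, 0) (y, 0) (0, v); rewrite /sum_map /= !hf => /(congr1 snd) /=.
  by do 3 rewrite ?be0 ?al0 ?bV0 ?aV0 ?(bil0l hth) ?(bil0r hth) ?(bil0l hll) ?(bil0r hll) ?(bil0l hlr) ?(bil0r hlr) ?(bil0l hdl) ?(bil0r hdl) ?add0r ?addr0.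
have cs : forall x y, th (be x) (al y) = - th (be y) (al x).
  move=> x y; have := skM (x, 0) (y, 0); rewrite /sum_map /= !hf => /(congr1 snd) /=.
  by do 3 rewrite ?be0 ?al0 ?bV0 ?aV0 ?(bil0l hth) ?(bil0r hth) ?(bil0l hll) ?(bil0r hll) ?(bil0l hlr) ?(bil0r hlr) ?(bil0l hdl) ?(bil0r hdl) ?add0r ?addr0.
have cc : forall x y z,
         th (be (be x)) (delta (be y) (al z)) - th (be (be y)) (delta (be x) (al z))
         + th (be (be z)) (delta (be x) (al y))
         + ll (be (be x)) (th (be y) (al z)) - ll (be (be y)) (th (be x) (al z))
         + ll (be (be z)) (th (be x) (al y)) = 0.
  move=> x y z; have := jacM (x, 0) (y, 0) (z, 0); rewrite /sum_map /= !hf => /(congr1 snd) /=.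
  do 3 rewrite ?be0 ?al0 ?bV0 ?aV0 ?(bil0l hth) ?(bil0r hth) ?(bil0l hll) ?(bil0r hll) ?(bil0l hlr) ?(bil0r hlr) ?(bil0l hdl) ?(bil0r hdl) ?add0r ?addr0.
  rewrite (sk z x) (cs z x) (bilNr hth) (bilNr hll) !addrA => e.
  rewrite (@GRing.add V).[ACl (1*4*2*5*3*6)%AC]; exact: e.
exists ll, lr, th; split; first exact: hll.
split; first exact: hlr.
split; first exact: hth.
split; first exact: hf.
split; first by split; [exact: hll | split; [exact: hlr | split; [exact: rep1 | exact: rep2]]].
by split; [exact: hth | split; [exact: cs | exact: cc]].
Qed.

Theorem mainTheorem1 (K : fieldType) (L V : lmodType K)
    (delta : L -> L -> L) (al be : L -> L) (aV bV : V -> V)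
    (d : (L * V)%type -> (L * V)%type -> (L * V)%type) :
  BiHomLie delta al be ->
  BiHomLie (@zero_br K V) aV bV ->
  is_bilin d ->
  (BiHomLie d (sum_map al aV) (sum_map be bV) /\
   is_extension delta al be (@zero_br K V) aV bV d (sum_map al aV) (sum_map be bV)
     (fun v : V => ((0 : L), v)) (fun m : (L * V)%type => m.1))
  <->
  (exists (ll : L -> V -> V) (lr : V -> L -> V) (th : L -> L -> V),
     (is_bilin ll) /\ (is_bilin lr) /\ (is_bilin th) /\
         ((forall (x y : L) (v w : V),
            d (x, v) (y, w) = (delta x y, th x y + ll x w + lr v y))) /\
         (is_representation delta al be aV bV ll lr) /\
         (is_2cocycle delta al be ll th)).
Proof.
move=> hL hV hd; split; [exact: fwd | exact: back].
Qed.
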